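(* Let $x^*\in\mathbb{O}^n$. Then $x^*$ is an equilibrium of the PID opinion dynamics (i.e., $P_i(x^* )=\{x_i^*\}$ for every $i\in\mathcal V$) if and only if at least one of the following holds: (1) $x^*$ is a consensus state, i.e., $x_1^*=x_2^*=\cdots=x_n^*$; (2) for every $z\in\mathbb{O}$ with $z<\theta$, the set $\mathcal V_{\le z}(x^* )$ is a strictly cohesive set in $\mathcal G(W)$, and for every $z\in\mathbb{O}$ with $z>\theta$, the set $\mathcal V_{\ge z}(x^* )$ is a strictly cohesive set in $\mathcal G(W)$.
   Context: Let $n\ge 1$, $\mathcal V=\{1,\dots,n\}$, and let $W=(w_{ij})$ be an $n\times n$ row-stochastic matrix (nonnegative entries, each row summing to $1$); $\mathcal G(W)$ is the weighted directed graph on $\mathcal V$ with an edge $i\to j$ iff $w_{ij}>0$. The opinion set is a finite set of consecutive integers $\mathbb O=\{k,k+1,\dots,k+s\}$, and $\theta\in\mathbb O$ is a fixed ''truth''. For $x\in\mathbb O^n$, $i\in\mathcal V$, $z\in\mathbb O$, define the social cost $C^i_{\mathrm{social}}(z;x)=\sum_{j=1}^n w_{ij}|z-x_j|$ and the cognitive cost $C^i_{\mathrm{cog}}(z)=|z-\theta|$. The Pareto-improvement set is $P_i(x)=\{z\in\mathbb O: C^i_{\mathrm{social}}(z;x)\le C^i_{\mathrm{social}}(x_i;x),\ |z-\theta|\le |x_i-\theta|\}$. In the PID opinion dynamics, starting from $x(0)\in\mathbb O^n$, at each time $t+1$ a node $i$ is chosen uniformly at random from $\mathcal V$ and sets $x_i(t+1)$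 to an element chosen at random from $P_i(x(t))$; all other nodes keep their opinions. An equilibrium is a state $x^*$ with $P_i(x^* )=\{x^*_i\}$ for all $i$. For $x\in\mathbb O^n$ and $z\in\mathbb Z$, $\mathcal V_{\le z}(x)=\{j\in\mathcal V: x_j\le z\}$ and $\mathcal V_{\ge z}(x)=\{j\in\mathcal V: x_j\ge z\}$. A set $\mathcal M\subseteq\mathcal V$ is strictly cohesive if $\sum_{j\in\mathcal M}w_{ij}>\tfrac12$ for every $i\in\mathcal M$; by convention the empty set is strictly cohesive. *)

(* Defs.v *)
From HB Require Import structures.
From mathcomp Require Import all_boot all_order all_algebra.
Set Implicit Arguments. Unset Strict Implicit. Unset Printing Implicit Defensive.
Import Order.TTheory GRing.Theory Num.Theory.
Local Open Scope ring_scope.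

(* Nodes are 'I_n; opinions are integers; the opinion set is
   O = {k, k+1, ..., k+s} with k : int, s : nat. *)

Definition in_opinions (k : int) (s : nat) (z : int) : bool :=
  (k <= z) && (z <= k + s%:Z).

Definition row_stochastic (R : realFieldType) (n : nat) (W : 'M[R]_n) : Prop :=
  (forall i j, 0 <= W i j) /\ (forall i, \sum_(j < n) W i j = 1).

Definition social_cost (R : realFieldType) (n : nat) (W : 'M[R]_n)
  (x : 'I_n -> int) (i : 'I_n) (z : int) : R :=
  \sum_(j < n) W i j * (`|z - x j|%:~R).

Definition pareto_improvement (R : realFieldType) (n : nat) (W : 'M[R]_n)
  (k : int) (s : nat) (theta : int) (x : 'I_n -> int) (i : 'I_n) (z : int) : Prop :=
  in_opinions k s z /\
  (social_cost W x i z <= social_cost W x i (x i)) /\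
  (`|z - theta| <= `|x i - theta|).

Definition is_equilibrium (R : realFieldType) (n : nat) (W : 'M[R]_n)
  (k : int) (s : nat) (theta : int) (x : 'I_n -> int) : Prop :=
  forall i : 'I_n, forall z : int, pareto_improvement W k s theta x i z <-> z = x i.

Definition V_le (n : nat) (x : 'I_n -> int) (z : int) : {set 'I_n} :=
  [set j | x j <= z].
Definition V_ge (n : nat) (x : 'I_n -> int) (z : int) : {set 'I_n} :=
  [set j | z <= x j].

(* Strictly cohesive: sum_{j in M} w_ij > 1/2 for all i in M (vacuous for M empty). *)
Definition strictly_cohesive (R : realFieldType) (n : nat) (W : 'M[R]_n)
  (M : {set 'I_n}) : Prop :=
  forall i, i \in M -> 2^-1 < \sum_(j in M) W i j.

Definition consensus (n : nat) (x : 'I_n -> int) : Prop :=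
  forall i j : 'I_n, x i = x j.

(* Main.v *)
Require Import Defs.
From HB Require Import structures.
From mathcomp Require Import all_boot all_order all_algebra.
From mathcomp Require Import zify ring lra.
Import Order.TTheory GRing.Theory Num.Theory.
Local Open Scope ring_scope.

Section Aux.
Variables (R : realFieldType) (n : nat) (W : 'M[R]_n).

Lemma sum_sign (x : 'I_n -> int) i a :
  \sum_(j < n) W i j = 1 ->
  \sum_(j < n) W i j * (if a <= x j then 1 else -1) =
  2 * \sum_(j in V_ge x a) W i j - 1.
Proof.
move=> H1.
rewrite (eq_bigr (fun j => 2 * (if a <= x j then W i j else 0) - W i j)); last first.
  by move=> j _; case: ifP => _; ring.
rewrite sumrB H1 -mulr_sumr [in RHS]big_mkcond /=.
congr (2 * _ - 1); apply: eq_bigr => j _; by rewrite inE.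
Qed.

Lemma diffA (x : 'I_n -> int) i a :
  \sum_(j < n) W i j = 1 ->
  social_cost W x i (a - 1) - social_cost W x i a =
  2 * \sum_(j in V_ge x a) W i j - 1.
Proof.
move=> H1; rewrite -sum_sign // /social_cost -sumrB.
apply: eq_bigr => j _; rewrite -mulrBr -rmorphB /=; congr (_ * _).
case: ifP => h.
- have -> : `|a - 1 - x j| - `|a - x j| = 1 :> int by lia.
  by [].
- have -> : `|a - 1 - x j| - `|a - x j| = -1 :> int by lia.
  by rewrite (_ : (-1)%Z = - 1%:Z) // intrN.
Qed.

Lemma diffB (x : 'I_n -> int) i a z :
  (forall j, 0 <= W i j) -> \sum_(j < n) W i j = 1 -> z < a ->
  (a - z)%:~R * (2 * \sum_(j in V_ge x a) W i j - 1) <=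
  social_cost W x i z - social_cost W x i a.
Proof.
move=> H0 H1 hz; rewrite -sum_sign // mulr_sumr /social_cost -sumrB.
apply: ler_sum => j _; rewrite -mulrBr -rmorphB /= mulrCA.
apply: ler_wpM2l => //.
case: ifP => h.
- rewrite mulr1 ler_int; lia.
- rewrite mulrN1 -rmorphN ler_int; lia.
Qed.

Lemma social_neg (x : 'I_n -> int) i z :
  social_cost W x i z = social_cost W (fun j => - x j) i (- z).
Proof.
apply: eq_bigr => j _; congr (_ * _%:~R).
by rewrite -opprD normrN.
Qed.

Lemma Vle_neg (x : 'I_n -> int) a : V_le x a = V_ge (fun j => - x j) (- a).
Proof. by apply/setP => j; rewrite !inE lerN2. Qed.

Lemma diffA' (x : 'I_n -> int) i a :
  \sum_(j < n) W i j = 1 ->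
  social_cost W x i (a + 1) - social_cost W x i a =
  2 * \sum_(j in V_le x a) W i j - 1.
Proof.
move=> H1; rewrite !(social_neg x) Vle_neg -diffA //.
by rewrite opprD.
Qed.

Lemma diffB' (x : 'I_n -> int) i a z :
  (forall j, 0 <= W i j) -> \sum_(j < n) W i j = 1 -> a < z ->
  (z - a)%:~R * (2 * \sum_(j in V_le x a) W i j - 1) <=
  social_cost W x i z - social_cost W x i a.
Proof.
move=> H0 H1 hz; rewrite !(social_neg x) Vle_neg.
have -> : z - a = - a - - z by ring.
by apply: diffB => //; rewrite ltrN2.
Qed.

Lemma sum_sub (A B : {set 'I_n}) i :
  (forall j, 0 <= W i j) -> A \subset B ->
  \sum_(j in A) W i j <= \sum_(j in B) W i j.
Proof.
move=> H0 sAB.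
rewrite [X in _ <= X](bigID (fun j => j \in A)) /=.
have -> : \sum_(j in B | j \in A) W i j = \sum_(j in A) W i j.
  by apply: eq_bigl => j; rewrite andb_idl // => /(subsetP sAB).
by rewrite lerDl sumr_ge0.
Qed.

End Aux.

Theorem theorem1 (R : realFieldType) (n : nat) (W : 'M[R]_n)
  (k : int) (s : nat) (theta : int) (xs : 'I_n -> int) :
  (1 <= n)%N ->
  row_stochastic W ->
  in_opinions k s theta ->
  (forall i, in_opinions k s (xs i)) ->
  (is_equilibrium W k s theta xs <->
   (consensus xs \/
    ((forall z : int, in_opinions k s z -> z < theta ->
        strictly_cohesive W (V_le xs z)) /\
     (forall z : int, in_opinions k s z -> theta < z ->
        strictly_cohesive W (V_ge xs z))))).
Proof.
move=> _ [H0 H1] Ht Hx; rewrite /in_opinions in Ht Hx *.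
split.
- move=> Heq; right; split.
  + move=> z _ hz i; rewrite inE => hi.
    have hsa := Heq i (xs i + 1).
    have : social_cost W xs i (xs i) < social_cost W xs i (xs i + 1).
      rewrite ltNge; apply/negP => hle.
      have : xs i + 1 = xs i.
        apply/hsa; split; last split => //.
        - move: (Hx i) => /andP [? ?]; move: Ht => /andP [? ?]; apply/andP; split; lia.
        - lia.
      lia.
    rewrite -[_ < _]subr_gt0 diffA' // => hpos.
    have : 2^-1 < \sum_(j in V_le xs (xs i)) W i j.
      lra.
    move=> h; apply: (lt_le_trans h); apply: sum_sub => //.
    by apply/subsetP => j; rewrite !inE => hj; apply: le_trans hj hi.
  + move=> z _ hz i; rewrite inE => hi.
    have hsa := Heq i (xs i - 1).
    have : social_cost W xs i (xs i) < social_cost W xs i (xs i - 1).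
      rewrite ltNge; apply/negP => hle.
      have : xs i - 1 = xs i.
        apply/hsa; split; last split => //.
        - move: (Hx i) => /andP [? ?]; move: Ht => /andP [? ?]; apply/andP; split; lia.
        - lia.
      lia.
    rewrite -[_ < _]subr_gt0 diffA // => hpos.
    have : 2^-1 < \sum_(j in V_ge xs (xs i)) W i j.
      lra.
    move=> h; apply: (lt_le_trans h); apply: sum_sub => //.
    by apply/subsetP => j; rewrite !inE => hj; apply: le_trans hi hj.
- move=> Hc.
  have [Cle Cge] : (forall z : int, in_opinions k s z -> z < theta ->
        strictly_cohesive W (V_le xs z)) /\
     (forall z : int, in_opinions k s z -> theta < z ->
        strictly_cohesive W (V_ge xs z)).
    case: Hc => // Hcons; split => z _ _ i hi.
    + have -> : \sum_(j in V_le xs z) W i j = \sum_(j < n) W i j.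
        by apply: eq_bigl => j; rewrite !inE (Hcons j i); rewrite inE in hi.
      rewrite H1; lra.
    + have -> : \sum_(j in V_ge xs z) W i j = \sum_(j < n) W i j.
        by apply: eq_bigl => j; rewrite !inE (Hcons j i); rewrite inE in hi.
      rewrite H1; lra.
  move=> i z; split; last first.
    by move=> ->; split; [exact: Hx | split].
  case=> [hzO [hsoc hab]].
  case: (eqVneq z (xs i)) => // hne; exfalso.
  case: (ltgtP (xs i) theta) => hat.
  - have hza : xs i < z by lia.
    have := Cle (xs i) (Hx i) hat i; rewrite inE => /(_ (lexx _)) hS.
    have := @diffB' R n W xs i (xs i) z (H0 i) (H1 i) hza.
    have hp : (0 : R) < (z - xs i)%:~R by rewrite ltr0z; lia.
    have hq : (0 : R) < 2 * \sum_(j in V_le xs (xs i)) W i j - 1 by lra.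
    have := mulr_gt0 hp hq; lra.
  - have hza : z < xs i by lia.
    have := Cge (xs i) (Hx i) hat i; rewrite inE => /(_ (lexx _)) hS.
    have := @diffB R n W xs i (xs i) z (H0 i) (H1 i) hza.
    have hp : (0 : R) < (xs i - z)%:~R by rewrite ltr0z; lia.
    have hq : (0 : R) < 2 * \sum_(j in V_ge xs (xs i)) W i j - 1 by lra.
    have := mulr_gt0 hp hq; lra.
  - lia.
Qed.
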